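(* Let $Z\subseteq\{0,1\}^n$. For $\bm\alpha\in\mathbb R^n$ let $$C(\bm\alpha)=\Big\{(\bm x,\bm z)\in\mathbb R^n\times\operatorname{conv}(Z):\ \sum_{i=1}^n|\alpha_ix_i|\le\sqrt{\textstyle\sum_{i=1}^n\alpha_i^2z_i}\Big\},\qquad \bar C=\bigcap_{\bm\alpha\in\mathbb R^n}C(\bm\alpha).$$ Then $\bar C=R_{\mathrm{persp}}$, where $$R_{\mathrm{persp}}=\Big\{(\bm x,\bm z)\in\mathbb R^n\times\operatorname{conv}(Z):\ \sum_{i=1}^n\frac{x_i^2}{z_i}\le1\Big\}.$$
   Context: Division convention: $a/b=0$ if $a=b=0$, and $a/b=+\infty$ if $b=0$ and $a\neq0$ (so $x_i^2/z_i=+\infty$ when $z_i=0\ne x_i$). $\operatorname{conv}$ denotes the convex hull. *)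

(* Defs.v *)
From HB Require Import structures.
From mathcomp Require Import all_boot all_order all_algebra.
From mathcomp Require Import all_classical all_reals.
From mathcomp Require Import ereal.
Set Implicit Arguments. Unset Strict Implicit. Unset Printing Implicit Defensive.
Import Order.TTheory GRing.Theory Num.Theory.
Local Open Scope classical_set_scope.
Local Open Scope ring_scope.

Section Defs.
Variables (R : realType) (n : nat).

(* Points of {0,1}^n are boolean vectors; their real coordinates are (v i)%:R. *)
Definition cube := {ffun 'I_n -> bool}.

Definition convZ (Z : {set cube}) : set ('I_n -> R) :=
  [set z | exists lam : cube -> R,
     [/\ (forall v, 0 <= lam v),
         (forall v, v \notin Z -> lam v = 0),
         \sum_(v : cube) lam v = 1 &
         forall i, z i = \sum_(v : cube) lam v * (v i)%:R]].

Definition Calpha (Z : {set cube}) (alpha : 'I_n -> R)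
  : set (('I_n -> R) * ('I_n -> R)) :=
  [set p | convZ Z p.2 /\
     \sum_(i < n) `|alpha i * p.1 i| <= Num.sqrt (\sum_(i < n) alpha i ^+ 2 * p.2 i)].

Definition Cbar (Z : {set cube}) : set (('I_n -> R) * ('I_n -> R)) :=
  \bigcap_(alpha in [set: 'I_n -> R]) Calpha Z alpha.

(* x^2/z with the convention a/0 = 0 if a = 0 and +oo otherwise. *)
Definition persp_term (x z : R) : \bar R :=
  if z == 0 then (if x == 0 then 0%E else +oo%E) else (x ^+ 2 / z)%:E.

Definition Rpersp (Z : {set cube}) : set (('I_n -> R) * ('I_n -> R)) :=
  [set p | convZ Z p.2 /\
     (\sum_(i < n) persp_term (p.1 i) (p.2 i) <= 1%E)%E].

End Defs.

(* Main.v *)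
Require Import Defs.
From mathcomp Require Import all_boot all_order all_algebra.
From mathcomp Require Import all_classical all_reals.
From mathcomp Require Import ereal ring lra.
Import Order.TTheory GRing.Theory Num.Theory.
Local Open Scope ring_scope.
Set Implicit Arguments. Unset Strict Implicit.

Section Aux.
Variables (R : realType) (n : nat).

Definition tt (x z : R) : R := if z == 0 then 0 else x ^+ 2 / z.

Lemma persp_fin (x z : R) : (z == 0) ==> (x == 0) -> persp_term x z = (tt x z)%:E.
Proof. by rewrite /persp_term /tt; case: (z == 0) => //= /eqP ->; rewrite eqxx. Qed.

Lemma persp_ge0 (x z : R) : 0 <= z -> (0 <= persp_term x z)%E.
Proof.
move=> z0; rewrite /persp_term; case: (z == 0); first by case: (x == 0).
by rewrite lee_fin divr_ge0 // sqr_ge0.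
Qed.

Lemma tt_ge0 (x z : R) : 0 <= z -> 0 <= tt x z.
Proof. by move=> z0; rewrite /tt; case: (z == 0) => //; rewrite divr_ge0 // sqr_ge0. Qed.

Lemma key (x z : 'I_n -> R) : (forall i, 0 <= z i) ->
  (\sum_(i < n) persp_term (x i) (z i) <= 1)%E <->
  ([forall i, (z i == 0) ==> (x i == 0)] /\ \sum_(i < n) tt (x i) (z i) <= 1).
Proof.
move=> z0; case: (boolP [forall i, _]) => [/forallP H|/forallPn [i Hi]].
  rewrite (eq_bigr (fun i => (tt (x i) (z i))%:E)); last by move=> i _; apply: persp_fin.
  by rewrite sumEFin lee_fin; split => // -[].
split => [|[]//] H; exfalso; move: H.
rewrite negb_imply in Hi; case/andP: Hi => /eqP zi0 xi0.
rewrite (bigD1 i) //= {1}/persp_term zi0 eqxx (negbTE xi0) addye ?leye_eq //.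
rewrite gt_eqF // (lt_le_trans _ (sume_ge0 _ _)) // => j _; exact: persp_ge0.
Qed.

Lemma convZ_ge0 (Z : {set cube n}) (z : 'I_n -> R) : convZ Z z -> forall i, 0 <= z i.
Proof.
move=> [lam [l0 _ _ zE]] i; rewrite zE; apply: sumr_ge0 => v _; apply: mulr_ge0 => //.
Qed.

End Aux.

Theorem proposition5 (R : realType) (n : nat) (Z : {set cube n}) :
  @Cbar R n Z = @Rpersp R n Z.
Proof.
apply/seteqP; split => -[x z] /=.
- move=> H.
  have [Hz _] : Calpha Z (fun _ => 0) (x, z) by exact: H.
  simpl in Hz.
  have z0 := convZ_ge0 Hz.
  split => //; apply/key => //.
  have Hc : [forall i, (z i == 0) ==> (x i == 0)].
    apply/forallP => i; apply/implyP => /eqP zi.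
    have [_ /=] := H (fun j => (j == i)%:R) I.
    rewrite (bigD1 i) //= big1 => [|j /negbTE ->]; last by rewrite mul0r normr0.
    rewrite (bigD1 i) //= big1 => [|j /negbTE ->]; last by rewrite expr0n /= mul0r.
    rewrite eqxx mul1r !addr0 zi mulr0 sqrtr0 => h.
    by rewrite -normr_eq0 eq_le h normr_ge0.
  split => //.
  set a := fun i => if z i == 0 then 0 else x i / z i.
  have [_ /=] := H a I.
  have E1 : forall i, `|a i * x i| = tt (x i) (z i).
    move=> i; rewrite /a /tt; case: eqP => [_|zn]; first by rewrite mul0r normr0.
    rewrite ger0_norm; first by rewrite mulrAC -expr2.
    by rewrite mulrAC -expr2 divr_ge0 // sqr_ge0.
  have E2 : forall i, a i ^+ 2 * z i = tt (x i) (z i).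
    move=> i; rewrite /a /tt; case: eqP => [_|/eqP zn]; first by rewrite expr0n mul0r.
    by rewrite expr2; field.
  rewrite (eq_bigr _ (fun i _ => E1 i)) (eq_bigr _ (fun i _ => E2 i)).
  set T := \sum_i _ => hT.
  have T0 : 0 <= T by apply: sumr_ge0 => i _; apply: tt_ge0.
  have s2 := sqr_sqrtr T0; have s0 := sqrtr_ge0 T.
  nra.
- move=> [Hz]; have z0 := convZ_ge0 Hz.
  move/key => /(_ z0) [/forallP Hc hT] a _; split => //=.
  set A := \sum_(i < n) a i ^+ 2 * z i.
  have A0 : 0 <= A by apply: sumr_ge0 => i _; apply: mulr_ge0 => //; exact: sqr_ge0.
  set s := Num.sqrt A; set L := \sum_(i < n) `|a i * x i|.
  have s0 : 0 <= s by apply: sqrtr_ge0.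
  have ss : s ^+ 2 = A by apply: sqr_sqrtr.
  have L0 : 0 <= L by apply: sumr_ge0.
  have [sp|] := ltP 0 s.
  + have term : forall i, 2 * s * `|a i * x i| <= a i ^+ 2 * z i + s ^+ 2 * tt (x i) (z i).
      move=> i; rewrite /tt; case: eqP => [zi|/eqP zn].
        by move: (Hc i); rewrite /= zi eqxx /= => /eqP xi; rewrite xi; rewrite mulr0 normr0 !mulr0 addr0.
      have zp : 0 < z i by rewrite lt_neqAle eq_sym zn z0.
      rewrite normrM.
      have := sqr_ge0 (`|a i| * z i - s * `|x i|).
      rewrite -(ler_pM2r zp) mul0r => h.
      suff : 2 * s * (`|a i| * `|x i|) * z i <= (a i ^+ 2 * z i + s ^+ 2 * (x i ^+ 2 / z i)) * z i.
        by rewrite ler_pM2r.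
      have -> : (a i ^+ 2 * z i + s ^+ 2 * (x i ^+ 2 / z i)) * z i =
                 a i ^+ 2 * z i ^+ 2 + s ^+ 2 * x i ^+ 2 by field.
      rewrite -[a i ^+ 2](real_normK (num_real (a i))) -[x i ^+ 2](real_normK (num_real (x i))); nra.
    have : 2 * s * L <= A + s ^+ 2 * \sum_i tt (x i) (z i).
      rewrite mulr_sumr mulr_sumr -big_split /=; apply: ler_sum => i _; exact: term.
    have T0 : 0 <= \sum_i tt (x i) (z i) by apply: sumr_ge0 => i _; apply: tt_ge0.
    rewrite -ss => h; nra.
  + move=> sle; have s00 : s = 0 by apply/eqP; rewrite eq_le sle s0.
    have A00 : A = 0 by rewrite -ss s00 expr0n.
    suff -> : L = 0 by rewrite s00.  
    rewrite /L big1 // => i _.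
    have := psumr_eq0P (fun i _ => mulr_ge0 (sqr_ge0 (a i)) (z0 i)) A00 (i := i) isT.
    move/eqP; rewrite mulf_eq0 sqrf_eq0 => /orP [/eqP ->|zi]; first by rewrite mul0r normr0.
    by move: (Hc i); rewrite zi /= => /eqP ->; rewrite mulr0 normr0.
Qed.
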